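(* Consider the quantized estimation system described in the context. Let $D_{\mathbf{u}}=\prod_{j=1}^N\prod_{l=1}^{L_j}R_{jl}$, let $\mathbf{a}_1,\dots,\mathbf{a}_{D_{\mathbf{u}}}$ enumerate all possible realizations of $\mathbf{u}$, and define $\varphi_{\mathbf{u}}:\Theta\to\mathbb{R}^{D_{\mathbf{u}}}$ by $\varphi_{\mathbf{u}}(\theta)=[\Pr(\mathbf{a}_1\mid\theta),\dots,\Pr(\mathbf{a}_{D_{\mathbf{u}}}\mid\theta)]^T$. For each $j$ fix an enumeration $\mathbf{s}^{(j)}_1,\dots,\mathbf{s}^{(j)}_{|\mathcal{S}_j|}$ of $\mathcal{S}_j$, let $\psi_j(\theta)=[q_j^{(\mathbf{s}^{(j)}_1)}(\theta),\dots,q_j^{(\mathbf{s}^{(j)}_{|\mathcal{S}_j|-1})}(\theta)]^T$, and define $\Psi:\Theta\to\mathbb{R}^{\sum_{j=1}^N\prod_{l=1}^{L_j}R_{jl}-N}$ by $\Psi(\theta)=[\psi_1(\theta)^T,\dots,\psi_N(\theta)^T]^T$. Then $\varphi_{\mathbf{u}}$ is injective if and only if $\Psi$ is injective. Consequently, the parameter space $\Theta$ is identifiable if and only if $\Psi$ is injective. Moreover, for any $N\ge1$ and any integers $R_{jl}\ge1$, the dimension of $\Psi(\theta)$ is strictly smaller than that of $\varphi_{\mathbf{u}}(\theta)$, i.e. $\sum_{j=1}^N\prod_{l=1}^{L_j}R_{jl}-N<\prod_{j=1}^N\prod_{l=1}^{L_j}R_{jl}$.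
   Context: Setting: $\Theta\subset\mathbb{R}^{D_\theta}$ is a parameter set. There are $N\ge 1$ sensors. Sensor $j$ observes a random vector $\mathbf{x}_j$ with law $\mathscr{P}_j^\theta$ on a measurable space $(\mathscr{X}_j,\mathscr{F}_j)$, indexed by $\theta\in\Theta$; $\mathbf{x}_1,\dots,\mathbf{x}_N$ are independent. Each $\mathbf{x}_j$ is partitioned into $L_j\ge1$ disjoint subvectors $\mathbf{x}_j=[\mathbf{x}_{j1}^T,\dots,\mathbf{x}_{jL_j}^T]^T$. For each $j,l$, $\gamma_{jl}$ is an $R_{jl}$-level vector quantizer: there are disjoint regions $I_{jl}^{(1)},\dots,I_{jl}^{(R_{jl})}$ covering its domain and $\gamma_{jl}(\mathbf{x}_{jl})=r$ iff $\mathbf{x}_{jl}\in I_{jl}^{(r)}$. The (measurable) superquantizer is $\Gamma_j(\mathbf{x}_j)=[\gamma_{j1}(\mathbf{x}_{j1}),\dots,\gamma_{jL_j}(\mathbf{x}_{jL_j})]^T$, $\mathbf{u}_j=\Gamma_j(\mathbf{x}_j)$, $\mathbf{u}=[\mathbf{u}_1^T,\dots,\mathbf{u}_N^T]^T$. $\mathcal{S}_j$ is the set of all possible outcomes of $\Gamma_j$ ($|\mathcal{S}_j|=\prod_l R_{jl}$), $q_j^{(\mathbf{s})}(\theta)=\mathscr{P}_j^\theta(\Gamma_j(\mathbf{x}_j)=\mathbf{s})$, and $\Pr(\mathbf{u}\mid\theta)=\prod_{j=1}^N q_j^{(\mathbf{u}_j)}(\theta)$. Two distinct points $\theta,\theta'\in\Theta$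 are observationally equivalent if $\Pr(\mathbf{u}\mid\theta)=\Pr(\mathbf{u}\mid\theta')$ for all possible $\mathbf{u}$. A point $\theta\in\Theta$ is identifiable if no $\theta'\in\Theta\setminus\{\theta\}$ is observationally equivalent to it. The parameter space $\Theta$ is identifiable if every $\theta\in\Theta$ is identifiable. *)

(* Defs.v *)
From HB Require Import structures.
From mathcomp Require Import all_boot all_order all_algebra.
From mathcomp Require Import all_classical all_reals.
From mathcomp Require Import measure probability_measure.
Unset Printing Implicit Defensive.
Import Order.TTheory GRing.Theory Num.Theory.

Local Open Scope classical_set_scope.
Local Open Scope ring_scope.

Section QuantizedSystem.
Variables (K : realType) (Dth N : nat) (L : 'I_N -> nat)
  (Rq : forall j : 'I_N, 'I_(L j) -> nat).

(* S_j : the set of all possible outcomes of the superquantizer Gamma_j;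
   the level r of gamma_jl is represented by an element of 'I_(R_jl)
   (levels 0..R_jl-1 instead of 1..R_jl). *)
Definition outcome (j : 'I_N) : finType := {dffun forall k : 'I_(L j), 'I_(Rq j k)}.

Definition realization : finType := {dffun forall j : 'I_N, outcome j}.

Definition Du : nat := (\prod_(j < N) \prod_(l < L j) Rq j l)%N.

Definition cardS (j : 'I_N) : nat := (\prod_(l < L j) Rq j l)%N.

Variables (d : 'I_N -> measure_display) (T : forall j, measurableType (d j))
  (P : forall j : 'I_N, 'rV[K]_Dth -> probability (T j) K)
  (Y : forall j : 'I_N, 'I_(L j) -> Type)
  (sub : forall j (l : 'I_(L j)), T j -> Y j l)
  (gamma : forall j (l : 'I_(L j)), Y j l -> 'I_(Rq j l)).

Definition Gamma (j : 'I_N) (x : T j) : outcome j :=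
  [ffun l => gamma j l (sub j l x)].

Definition qprob (j : 'I_N) (s : outcome j) (th : 'rV[K]_Dth) : K :=
  fine (P j th (Gamma j @^-1` [set s])).

Definition Pru (u : realization) (th : 'rV[K]_Dth) : K :=
  \prod_(j < N) qprob j (u j) th.

Definition varphi (a : 'I_Du -> realization) (th : 'rV[K]_Dth) : 'rV[K]_Du :=
  \row_(i < Du) Pru (a i) th.

Definition psi (s : forall j, 'I_(cardS j) -> outcome j) (j : 'I_N)
    (th : 'rV[K]_Dth) : 'rV[K]_((cardS j).-1) :=
  \row_(i < (cardS j).-1) qprob j (s j (widen_ord (leq_pred _) i)) th.

Definition Psi (s : forall j, 'I_(cardS j) -> outcome j) (th : 'rV[K]_Dth)
  : 'rV[K]_(\sum_(j < N) (cardS j).-1) :=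
  \mxrow_(j < N) psi s j th.

Definition obs_equiv (th th' : 'rV[K]_Dth) : Prop :=
  th <> th' /\ forall u : realization, Pru u th = Pru u th'.

Definition identifiable_point (Theta : set 'rV[K]_Dth) (th : 'rV[K]_Dth) : Prop :=
  forall th', Theta th' -> th' <> th -> ~ obs_equiv th th'.

Definition identifiable (Theta : set 'rV[K]_Dth) : Prop :=
  forall th, Theta th -> identifiable_point Theta th.

End QuantizedSystem.

Definition injective_on (A B : Type) (D : set A) (f : A -> B) : Prop :=
  forall x y, D x -> D y -> f x = f y -> x = y.

Arguments outcome {N L} Rq j.
Arguments realization {N L} Rq.
Arguments Du {N L} Rq.
Arguments cardS {N L} Rq j.
Arguments Gamma {N L Rq d T Y} sub gamma j x.
Arguments qprob {K Dth N L Rq d T} P {Y} sub gamma j s th.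
Arguments Pru {K Dth N L Rq d T} P {Y} sub gamma u th.
Arguments varphi {K Dth N L Rq d T} P {Y} sub gamma a th.
Arguments psi {K Dth N L Rq d T} P {Y} sub gamma s j th.
Arguments Psi {K Dth N L Rq d T} P {Y} sub gamma s th.
Arguments obs_equiv {K Dth N L Rq d T} P {Y} sub gamma th th'.
Arguments identifiable_point {K Dth N L Rq d T} P {Y} sub gamma Theta th.
Arguments identifiable {K Dth N L Rq d T} P {Y} sub gamma Theta.
Arguments injective_on {A B} D f.

(* Main.v *)
Require Import Defs.
From HB Require Import structures.
From mathcomp Require Import all_boot all_order all_algebra.
From mathcomp Require Import all_classical all_reals.
From mathcomp Require Import measure probability_measure.
From mathcomp Require Import zify.
Import Order.TTheory GRing.Theory Num.Theory.
Local Open Scope classical_set_scope.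
Local Open Scope ring_scope.
Lemma last_det (K : nzRingType) n (f g : 'I_n -> K) :
  \sum_i f i = 1 -> \sum_i g i = 1 ->
  (forall i : 'I_n.-1, f (widen_ord (leq_pred n) i) = g (widen_ord (leq_pred n) i)) ->
  forall i, f i = g i.
Proof.
case: n f g => [|m] f g; first by rewrite big_ord0 => /esym/eqP; rewrite oner_eq0.
move=> Hf Hg H.
have Hw : forall i : 'I_m, f (widen_ord (leqnSn m) i) = g (widen_ord (leqnSn m) i).
  by move=> i; have := H i; congr (f _ = g _); apply: val_inj.
have Hl : f ord_max = g ord_max.
  move: Hf Hg; rewrite !big_ord_recr /=.
  under eq_bigr do rewrite Hw.
  by move=> <- /addrI.
move=> i; case: (ltnP i m) => [lt|ge].
  by have := H (Ordinal lt); congr (f _ = g _); apply: val_inj.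
have -> : i = ord_max by apply: val_inj => /=; apply/eqP; rewrite eqn_leq ge -ltnS ltn_ord.
exact: Hl.
Qed.

Lemma arith N (c : 'I_N -> nat) : (0 < N)%N -> (forall j, 0 < c j)%N ->
  (\sum_(j < N) c j - N < \prod_(j < N) c j)%N.
Proof.
move=> _ Hc.
have Pp : (0 < \prod_(j < N) c j)%N by rewrite prodn_gt0.
suff : (\sum_(j < N) c j < \prod_(j < N) c j + N)%N by move: Pp; lia.
clear Pp; elim: N c Hc => [|n IH] c Hc; first by rewrite !big_ord0.
rewrite big_ord_recr big_ord_recr /=.
have := IH (fun i => c (widen_ord (leqnSn n) i)) (fun i => Hc _).
set S := \sum_(i < n) _; set Q := \prod_(i < n) _.
have Q1 : (0 < Q)%N by rewrite prodn_gt0.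
have := Hc ord_max.
move=> h1 h2. nia.
Qed.
Lemma qsum1 (K : realType) (Dth N : nat) (L : 'I_N -> nat)
  (Rq : forall j : 'I_N, 'I_(L j) -> nat)
  (d : 'I_N -> measure_display) (T : forall j, measurableType (d j))
  (P : forall j : 'I_N, 'rV[K]_Dth -> probability (T j) K)
  (Y : forall j : 'I_N, 'I_(L j) -> Type)
  (sub : forall j (l : 'I_(L j)), T j -> Y j l)
  (gamma : forall j (l : 'I_(L j)), Y j l -> 'I_(Rq j l))
  (s : forall j, 'I_(cardS Rq j) -> outcome Rq j) j th :
  (forall (u : outcome Rq j), measurable (Gamma sub gamma j @^-1` [set u])) ->
  bijective (s j) ->
  \sum_(i < cardS Rq j) qprob P sub gamma j (s j i) th = 1.
Proof.
move=> mG [sinv sK Ks].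
set F := fun i => Gamma sub gamma j @^-1` [set s j i].
have mF : forall i, measurable (F i) by move=> i; exact: mG.
have tF : trivIset setT F.
  move=> i k _ _ [x [/= Hi Hk]].
  by apply: (can_inj sK); rewrite -Hi -Hk.
have UF : \big[setU/set0]_(i < cardS Rq j) F i = setT.
  apply/seteqP; split => // x _.
  rewrite (bigD1 (sinv (Gamma sub gamma j x))) //=; left.
  by rewrite /F /= Ks.
have := measure_bigsetU_ord (P j th) xpredT mF tF.
rewrite UF => H.
have H1 : (1%:E = \sum_(i < cardS Rq j) P j th (F i))%E.
  by rewrite -H; symmetry; exact: probability_setT.
have fin : forall i, P j th (F i) = (qprob P sub gamma j (s j i) th)%:E.
  move=> i; rewrite /qprob fineK //; exact: fin_num_measure.
move: H1; under eq_bigr do rewrite fin.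
by rewrite sumEFin => -[].
Qed.
Section Main.
Variables (K : realType) (Dth N : nat) (L : 'I_N -> nat)
  (Rq : forall j : 'I_N, 'I_(L j) -> nat)
  (d : 'I_N -> measure_display) (T : forall j, measurableType (d j))
  (P : forall j : 'I_N, 'rV[K]_Dth -> probability (T j) K)
  (Y : forall j : 'I_N, 'I_(L j) -> Type)
  (sub : forall j (l : 'I_(L j)), T j -> Y j l)
  (gamma : forall j (l : 'I_(L j)), Y j l -> 'I_(Rq j l))
  (s : forall j, 'I_(cardS Rq j) -> outcome Rq j).
Hypothesis mG : forall j (u : outcome Rq j), measurable (Gamma sub gamma j @^-1` [set u]).
Hypothesis sbij : forall j, bijective (s j).

Local Notation q := (qprob P sub gamma).

Lemma qsumT j th : \sum_(t : outcome Rq j) q j t th = 1.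
Proof.
rewrite -(@qsum1 _ _ _ _ _ _ _ P _ sub gamma s j th (mG j) (sbij j)).
case: (sbij j) => sinv sK Ks.
rewrite (reindex (s j)) //; exists sinv => x _; [exact: sK | exact: Ks].
Qed.

Lemma Pru_q th th' :
  (forall u, Pru P sub gamma u th = Pru P sub gamma u th') <->
  (forall j t, q j t th = q j t th').
Proof.
split; last first.
  by move=> H u; rewrite /Pru; apply: eq_bigr => j _; rewrite H.
move=> H.
have ex : forall k, exists t : outcome Rq k, q k t th != 0.
  move=> k; case: (pselect (exists t : outcome Rq k, q k t th != 0)) => // H0; exfalso.
  have := qsumT k th; rewrite big1 => [|t _]; last first.
    by apply/eqP/negPn/negP => nz; apply: H0; exists t.
  by move/eqP; rewrite eq_sym oner_eq0.
pose w : forall k, outcome Rq k := fun k => xchoose (ex k).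
have wP : forall k, q k (w k) th != 0 := fun k => xchooseP (ex k).
move=> i t.
pose A x := \prod_(k < N | k != i) q k (w k) x.
have key : forall t', q i t' th * A th = q i t' th' * A th'.
  move=> t'.
  pose u : realization Rq := finfun (@dfwith _ (outcome Rq) w i t').
  have ui : u i = t' by rewrite ffunE; exact: dfwith_in.
  have uk : forall k, k != i -> u k = w k.
    by move=> k ki; rewrite ffunE; apply: dfwith_out; rewrite eq_sym.
  have := H u.
  rewrite /Pru (bigD1 i) //= (bigD1 i (P:=xpredT)) //= ui.
  congr (_ * _ = _ * _); apply: eq_bigr => k ki; by rewrite uk.
have AA : A th = A th'.
  have := congr1 (fun f => \sum_(t' : outcome Rq i) f t') (funext key) => /=.
  by rewrite -!mulr_suml !qsumT !mul1r.
have A0 : A th != 0 by apply/prodf_neq0 => k _.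
have := key t; rewrite -AA => /mulIf; apply; exact: A0.
Qed.
Lemma Psi_q th th' :
  Psi P sub gamma s th = Psi P sub gamma s th' <-> (forall j t, q j t th = q j t th').
Proof.
split; last first.
  by move=> H; rewrite /Psi; apply/eq_mxrowP => j; apply/rowP => i; rewrite !mxE H.
rewrite /Psi => /eq_mxrowP Hj j t.
case: (sbij j) => sinv sK Ks; rewrite -(Ks t).
apply: (@last_det _ _ (fun i => q j (s j i) th) (fun i => q j (s j i) th')).
- exact: (@qsum1 _ _ _ _ _ _ _ P _ sub gamma s j th (mG j) (sbij j)).
- exact: (@qsum1 _ _ _ _ _ _ _ P _ sub gamma s j th' (mG j) (sbij j)).
move=> i; have := Hj j; move/matrixP/(_ 0 i); by rewrite !mxE.
Qed.
End Main.

Theorem lemma1 (K : realType) (Dth N : nat) (L : 'I_N -> nat)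
  (Rq : forall j : 'I_N, 'I_(L j) -> nat)
  (d : 'I_N -> measure_display) (T : forall j, measurableType (d j))
  (P : forall j : 'I_N, 'rV[K]_Dth -> probability (T j) K)
  (Y : forall j : 'I_N, 'I_(L j) -> Type)
  (sub : forall j (l : 'I_(L j)), T j -> Y j l)
  (gamma : forall j (l : 'I_(L j)), Y j l -> 'I_(Rq j l))
  (Theta : set 'rV[K]_Dth)
  (a : 'I_(Du Rq) -> realization Rq)
  (s : forall j, 'I_(cardS Rq j) -> outcome Rq j) :
  (0 < N)%N ->
  (forall j, 0 < L j)%N ->
  (forall j l, 0 < Rq j l)%N ->
  (* x_j is partitioned into the subvectors x_j1, ..., x_jL_j *)
  (forall j (x y : T j), (forall l, sub j l x = sub j l y) -> x = y) ->
  (* the superquantizer Gamma_j is measurable *)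
  (forall j (u : outcome Rq j), measurable (Gamma sub gamma j @^-1` [set u])) ->
  bijective a ->
  (forall j, bijective (s j)) ->
  (injective_on Theta (varphi P sub gamma a) <-> injective_on Theta (Psi P sub gamma s))
  /\ (identifiable P sub gamma Theta <-> injective_on Theta (Psi P sub gamma s))
  /\ (\sum_(j < N) \prod_(l < L j) Rq j l - N < \prod_(j < N) \prod_(l < L j) Rq j l)%N.
Proof.
move=> N0 _ Rpos _ mG [ainv aK Ka] sbij.
have PQ := @Pru_q _ _ _ _ _ _ _ P _ sub gamma s mG sbij.
have SQ := @Psi_q _ _ _ _ _ _ _ P _ sub gamma s mG sbij.
split; [|split].
- split.
  + move=> Hv x y Dx Dy E; apply: Hv => //.
    apply/rowP => i; rewrite !mxE; exact: (proj2 (PQ x y) (proj1 (SQ x y) E)).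
  + move=> Hp x y Dx Dy E; apply: Hp => //; apply/SQ/PQ => u.
    by have := E; move/rowP/(_ (ainv u)); rewrite !mxE Ka.
- split.
  + move=> Hid x y Dx Dy E; case: (pselect (x = y)) => // nxy; exfalso.
    apply: (Hid x Dx y Dy (nesym nxy)); split => //; apply/PQ/SQ; exact: E.
  + move=> Hp th Dt th' Dt' ne [_ Hu]; apply: ne; symmetry; apply: Hp => //.
    by apply/SQ/PQ.
- apply: (@arith N (fun j => \prod_(l < L j) Rq j l) N0) => j.
  by rewrite prodn_gt0.
Qed.
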